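(* Let $\Lambda\in\mathcal{M}_2$ and $a\in[0,1]$, and let $\widehat{\Lambda}(t):=\Lambda(t,1-t)$ for $t\in[0,1]$. The following are equivalent: (1) the right derivative $\widehat{\Lambda}'(0)$ equals $a$; (2) $\lim_{y\to\infty}\Lambda(x,y)=ax$ for all $x\in\mathbb{R}_+$.
   Context: $\mathcal{M}_2$ is the set of bivariate (lower) tail dependence functions, i.e. functions $\mathbb{R}_+^2\to\mathbb{R}_+$ ($\mathbb{R}_+=[0,\infty)$) of the form $\Lambda(\mathbf{w})=\lim_{s\searrow0}C(s\mathbf{w})/s$ for a $2$-copula $C$ (limit existing for all $\mathbf{w}$). Such $\Lambda$ are concave, $1$-Lipschitz, positively homogeneous of order $1$, and satisfy $0\le\Lambda(w_1,w_2)\le\min\{w_1,w_2\}$. *)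

(* Defs.v *)
From Stdlib Require Import Reals Lra.
From Coquelicot Require Import Coquelicot.
Open Scope R_scope.

(* A 2-copula, represented as a function R -> R -> R whose values on [0,1]^2
   matter: maps [0,1]^2 into [0,1], grounded, uniform margins, 2-increasing. *)
Definition is_copula2 (C : R -> R -> R) : Prop :=
  (forall u v, 0 <= u <= 1 -> 0 <= v <= 1 -> 0 <= C u v <= 1) /\
  (forall u, 0 <= u <= 1 ->
     C u 0 = 0 /\ C 0 u = 0 /\ C u 1 = u /\ C 1 u = u) /\
  (forall u1 u2 v1 v2, 0 <= u1 -> u1 <= u2 -> u2 <= 1 ->
     0 <= v1 -> v1 <= v2 -> v2 <= 1 ->
     0 <= C u2 v2 - C u2 v1 - C u1 v2 + C u1 v1).

Definition is_tdf_of (C : R -> R -> R) (L : R -> R -> R) : Prop :=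
  forall w1 w2, 0 <= w1 -> 0 <= w2 ->
    filterlim (fun s => C (s * w1) (s * w2) / s) (at_right 0) (locally (L w1 w2)).

Definition in_M2 (L : R -> R -> R) : Prop :=
  exists C, is_copula2 C /\ is_tdf_of C L.

Definition Lhat (L : R -> R -> R) (t : R) : R := L t (1 - t).

(* Main.v *)
Require Import Defs.
From Stdlib Require Import Reals Lra.
From Coquelicot Require Import Coquelicot.
Open Scope R_scope.

Lemma lim_scal {T} (F : (T -> Prop) -> Prop) (f : T -> R) (k l : R) :
  filterlim f F (locally l) -> filterlim (fun x => k * f x) F (locally (k * l)).
Proof.
  intros H.
  exact (filterlim_comp _ _ _ f (fun z : R => scal k z) F (locally l) (locally (scal k l))
    H (filterlim_scal_r k l)).
Qed.

Lemma ball0 (eps : posreal) (y : R) : ball 0 eps y -> Rabs y < eps.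
Proof.
  intros H. change (Rabs (y + - 0) < eps) in H. rewrite Ropp_0, Rplus_0_r in H. exact H.
Qed.

Lemma ball0' (eps : posreal) (y : R) : Rabs y < eps -> ball 0 eps y.
Proof.
  intros H. change (Rabs (y + - 0) < eps). rewrite Ropp_0, Rplus_0_r. exact H.
Qed.

Lemma right_scale (c : R) : 0 < c ->
  filterlim (fun s => s * c) (at_right 0) (at_right 0).
Proof.
  intros Hc P [eps HP].
  assert (He : 0 < eps / c) by (apply Rdiv_lt_0_compat; [apply cond_pos | lra]).
  exists (mkposreal _ He). intros y Hy Hy0.
  apply ball0 in Hy; simpl in Hy. rewrite Rabs_pos_eq in Hy by lra.
  apply HP; [| nra].
  apply ball0'. rewrite Rabs_pos_eq by nra.
  assert (eps / c * c = eps) by (field; lra). nra.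
Qed.

Lemma hom C L : is_copula2 C -> is_tdf_of C L ->
  forall c w1 w2, 0 < c -> 0 <= w1 -> 0 <= w2 -> L (c*w1) (c*w2) = c * L w1 w2.
Proof.
  intros HC HL c w1 w2 Hc H1 H2.
  apply (filterlim_locally_unique (F:=at_right 0) (fun s => C (s*(c*w1)) (s*(c*w2)) / s)).
  - apply HL; nra.
  - apply filterlim_ext_loc with (f := fun s => c * ((fun t => C (t*w1) (t*w2) / t) (s*c))).
    + exists (mkposreal 1 Rlt_0_1). intros y _ Hy.
      replace (y*(c*w1)) with ((y*c)*w1) by ring.
      replace (y*(c*w2)) with ((y*c)*w2) by ring. field; lra.
    + apply lim_scal.
      apply (filterlim_comp _ _ _ (fun s => s*c) (fun t => C (t*w1) (t*w2) / t) (at_right 0) (at_right 0)).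
      apply right_scale; auto. apply HL; auto.
Qed.

Lemma zero0 C L : is_copula2 C -> is_tdf_of C L ->
  forall y, 0 <= y -> L 0 y = 0.
Proof.
  intros HC HL y Hy.
  apply (filterlim_locally_unique (F:=at_right 0) (fun s => C (s*0) (s*y) / s)).
  - apply HL; lra.
  - apply filterlim_ext_loc with (f := fun _ => 0).
    + assert (Hp : 0 < / (y + 1)) by (apply Rinv_0_lt_compat; lra).
      exists (mkposreal _ Hp). intros s Hs Hs0.
      apply ball0 in Hs; simpl in Hs. rewrite Rabs_pos_eq in Hs by lra.
      assert (Hi : (y+1) * / (y+1) = 1) by (apply Rinv_r; lra).
      rewrite Rmult_0_r.
      destruct HC as [_ [HG _]].
      destruct (HG (s*y)) as [_ [HG0 _]]; [nra|].
      rewrite HG0. unfold Rdiv. ring.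
    + apply filterlim_const.
Qed.

Theorem mainTheorem7 (L : R -> R -> R) (a : R) :
  in_M2 L -> 0 <= a <= 1 ->
  ( filterlim (fun h => (Lhat L h - Lhat L 0) / h) (at_right 0) (locally a)
    <->
    (forall x, 0 <= x -> is_lim (fun y => L x y) p_infty (a * x)) ).
Proof.
  intros [C [HC HL]] Ha.
  assert (HL0 : Lhat L 0 = 0).
  { unfold Lhat. apply (zero0 C L HC HL). lra. }
  assert (K1 : forall h, 0 < h < 1 -> (Lhat L h - Lhat L 0) / h = L 1 ((1-h)/h)).
  { intros h Hh. rewrite HL0. unfold Lhat.
    replace (L h (1-h)) with (L (h*1) (h*((1-h)/h))).
    2:{ f_equal; [ring | field; lra]. }
    rewrite (hom C L HC HL); try lra.
    - field; lra.
    - apply Rdiv_le_0_compat; lra. }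
  split.
  - intros Hf x Hx. destruct (Req_dec x 0) as [E|Pos].
    + subst x. change (filterlim (fun y => L 0 y) (Rbar_locally' p_infty) (locally (a*0))).
      apply filterlim_ext_loc with (f := fun _ => 0).
      * exists 0. intros y Hy. rewrite (zero0 C L HC HL); lra.
      * rewrite Rmult_0_r. apply filterlim_const.
    + assert (Hxp : 0 < x) by lra.
      change (filterlim (fun y => L x y) (Rbar_locally' p_infty) (locally (a*x))).
      rewrite Rmult_comm.
      apply filterlim_ext_loc with
        (f := fun y => x * ((fun h => (Lhat L h - Lhat L 0) / h) (1 / (1 + y / x)))).
      * exists 0. intros y Hy. simpl.
        assert (Hyx : 0 < y / x) by (apply Rdiv_lt_0_compat; lra).
        rewrite K1.
        2:{ split. apply Rdiv_lt_0_compat; lra.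
            apply (Rmult_lt_reg_r (1 + y/x)); [lra|].
            replace (1 / (1 + y / x) * (1 + y / x)) with 1 by (field; lra). lra. }
        replace ((1 - 1 / (1 + y / x)) / (1 / (1 + y / x))) with (y/x) by (field; lra).
        rewrite <- (hom C L HC HL); try lra.
        f_equal; field; lra.
      * apply lim_scal.
        apply (filterlim_comp _ _ _ (fun y => 1 / (1 + y / x)) (fun h => (Lhat L h - Lhat L 0) / h) _ (at_right 0)); [|exact Hf].
        intros P [eps HP]. exists (x / eps). intros y Hy.
        assert (He : 0 < eps) by apply cond_pos.
        assert (Hxe : 0 < x / eps) by (apply Rdiv_lt_0_compat; lra).
        assert (Hh : 0 < 1 / (1 + y / x)).
        { apply Rdiv_lt_0_compat; try lra.
          assert (0 < y / x) by (apply Rdiv_lt_0_compat; lra). lra. }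
        apply HP; [|exact Hh].
        apply ball0'. rewrite Rabs_pos_eq by lra.
        replace (1 / (1 + y / x)) with (x / (x + y)) by (field; lra).
        apply (Rmult_lt_reg_r (x + y)); [lra|].
        replace (x / (x + y) * (x + y)) with x by (field; lra).
        assert (eps * (x / eps) = x) by (field; lra). nra.
  - intros H2. specialize (H2 1 ltac:(lra)). rewrite Rmult_1_r in H2.
    apply filterlim_ext_loc with (f := fun h => L 1 ((1-h)/h)).
    + exists (mkposreal 1 Rlt_0_1). intros h Hb Hh.
      apply ball0 in Hb; simpl in Hb. rewrite Rabs_pos_eq in Hb by lra.
      symmetry. apply K1. lra.
    + apply (filterlim_comp _ _ _ (fun h => (1-h)/h) (fun y => L 1 y) _ (Rbar_locally' p_infty)); [|exact H2].
      intros P [M HM].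
      assert (Hp : 0 < / (Rabs M + 2)) by (apply Rinv_0_lt_compat; pose proof (Rabs_pos M); lra).
      exists (mkposreal _ Hp). intros h Hb Hh.
      apply ball0 in Hb; simpl in Hb. rewrite Rabs_pos_eq in Hb by lra.
      apply HM.
      assert (Hi : / / (Rabs M + 2) < / h) by (apply Rinv_lt_contravar; nra).
      rewrite Rinv_inv in Hi.
      replace ((1 - h) / h) with (/ h - 1) by (field; lra).
      pose proof (Rle_abs M). lra.
Qed.
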